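(* Let $(X,d,\alpha)$ be a computable metric space, let $n\ge1$, and let $S$ be a semi-computable compact set in this space. Then (i) the set $\{l\in\mathbb N: \mathcal H_l \text{ covers } S\}$ is computably enumerable; (ii) the set $\{l\in\mathbb N:\text{the lower boundary of }\mathcal H_l\text{ covers }S\}$ is computably enumerable.
   Context: A computable metric space is a triple $(X,d,\alpha)$ where $(X,d)$ is a metric space and $\alpha=(\alpha_i)_{i\in\mathbb N}$ is a sequence with dense range in $(X,d)$ such that $(i,j)\mapsto d(\alpha_i,\alpha_j)$ is a computable function $\mathbb N^2\to\mathbb R$ (a function $g:\mathbb N^k\to\mathbb R$ is computable if there is a computable $G:\mathbb N^{k+1}\to\mathbb Q$ with $|g(x)-G(x,i)|<2^{-i}$ for all $x,i$). Fix a computable $q:\mathbb N\to\mathbb Q$ whose image is the set of positive rationals and computable $\tau_1,\tau_2:\mathbb N\to\mathbb N$ with $\{(\tau_1(i),\tau_2(i)):i\in\mathbb N\}=\mathbb N^2$; let $\lambda_i=\alpha_{\tau_1(i)}$, $\rho_i=q_{\tau_2(i)}$, $I_i=B(\lambda_i,\rho_i)$ (open ball). Fix computable $\sigma:\mathbb N^2\to\mathbb N$, $\eta:\mathbb N\to\mathbb N$ such that $\{(\sigma(j,0),\dots,\sigma(j,\eta(j))):j\in\mathbb N\}$ is the set of all nonempty finite sequences in $\mathbb N$; write $(j)_i=\sigma(j,i)$, $[j]=\{(j)_i:0\le i\le\eta(j)\}$ and $J_j=\bigcup_{i\in[j]}I_i$. $S$ is semi-computable compact if $S$ is compact and $\{j:S\subseteq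 J_j\}$ is computably enumerable. Fix a computable injection $\nu:\mathbb N^n\to\mathbb N$; for $l,j_1,\dots,j_n\in\mathbb N$ write $\widehat l=\tau_2(l)$ and $(l)_{j_1,\dots,j_n}=(\tau_1(l))_{\nu(j_1,\dots,j_n)}$. Let $\mathcal H_l$ be the function $\{0,\dots,\widehat l\}^n\to\mathcal P(X)$, $(j_1,\dots,j_n)\mapsto J_{(l)_{j_1,\dots,j_n}}$. Its lower boundary is the function $\{0,\dots,\widehat l\}^{n-1}\to\mathcal P(X)$, $(j_1,\dots,j_{n-1})\mapsto J_{(l)_{j_1,\dots,j_{n-1},0}}$. A function $g:A\to\mathcal P(X)$ covers $S$ if $S\subseteq\bigcup_{a\in A}g(a)$. *)

(* Defs.v *)
From Stdlib Require Import Reals QArith Qreals List Arith.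
Open Scope R_scope.

Definition cpair (x y : nat) : nat := ((x + y) * (x + y + 1)) / 2 + y.

Fixpoint tcode (l : list nat) : nat :=
  match l with
  | nil => 0
  | cons x l' => S (cpair x (tcode l'))
  end.

Inductive code : Type :=
| CZero : code
| CSucc : code
| CId   : code
| CFst  : code
| CSnd  : code
| CComp : code -> code -> code
| CPair : code -> code -> code
| CRec  : code -> code -> code
| CMu   : code -> code.

Inductive eval : code -> nat -> nat -> Prop :=
| eZero n : eval CZero n 0
| eSucc n : eval CSucc n (S n)
| eId n : eval CId n n
| eFst x y : eval CFst (cpair x y) x
| eSnd x y : eval CSnd (cpair x y) y
| eComp f g x y z : eval g x y -> eval f y z -> eval (CComp f g) x z
| ePair f g x y z : eval f x y -> eval g x z -> eval (CPair f g) x (cpair y z)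
| eRec0 f g a y : eval f a y -> eval (CRec f g) (cpair a 0) y
| eRecS f g a k y z :
    eval (CRec f g) (cpair a k) y -> eval g (cpair a (cpair k y)) z ->
    eval (CRec f g) (cpair a (S k)) z
| eMu f x m :
    eval f (cpair x m) 0 ->
    (forall k, (k < m)%nat -> exists v, v <> 0%nat /\ eval f (cpair x k) v) ->
    eval (CMu f) x m.

Definition computable1 (f : nat -> nat) : Prop :=
  exists c, forall x, eval c x (f x).
Definition computable2 (f : nat -> nat -> nat) : Prop :=
  exists c, forall x y, eval c (tcode (x :: y :: nil)) (f x y).
Definition computable3 (f : nat -> nat -> nat -> nat) : Prop :=
  exists c, forall x y z, eval c (tcode (x :: y :: z :: nil)) (f x y z).
Definition computable_tuple (n : nat) (f : list nat -> nat) : Prop :=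
  exists c, forall l, length l = n -> eval c (tcode l) (f l).

Definition ce (A : nat -> Prop) : Prop :=
  exists c, forall x, A x <-> exists y, eval c x y.

Definition qof (a b c : nat) : Q :=
  ((if Nat.even c then 1 else -1) * inject_Z (Z.of_nat a) / inject_Z (Z.of_nat (S b)))%Q.

Definition computableQ1 (q : nat -> Q) : Prop :=
  exists a b c, computable1 a /\ computable1 b /\ computable1 c /\
    forall x, (q x == qof (a x) (b x) (c x))%Q.

Definition computableR2 (g : nat -> nat -> R) : Prop :=
  exists a b c, computable3 a /\ computable3 b /\ computable3 c /\
    forall x y i, Rabs (g x y - Q2R (qof (a x y i) (b x y i) (c x y i))) < / 2 ^ i.

Definition is_metric {X : Type} (d : X -> X -> R) : Prop :=
  (forall x y, d x y = 0 <-> x = y) /\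
  (forall x y, d x y = d y x) /\
  (forall x y z, d x z <= d x y + d y z).

Definition dense_seq {X : Type} (d : X -> X -> R) (alpha : nat -> X) : Prop :=
  forall x e, 0 < e -> exists i, d x (alpha i) < e.

Definition is_open {X : Type} (d : X -> X -> R) (U : X -> Prop) : Prop :=
  forall x, U x -> exists e, 0 < e /\ forall y, d x y < e -> U y.

Definition compact {X : Type} (d : X -> X -> R) (S : X -> Prop) : Prop :=
  forall (I : Type) (U : I -> X -> Prop),
    (forall i, is_open d (U i)) ->
    (forall x, S x -> exists i, U i x) ->
    exists l : list I, forall x, S x -> exists i, In i l /\ U i x.

Definition Iball {X : Type} (d : X -> X -> R) (alpha : nat -> X) (q : nat -> Q)
  (tau1 tau2 : nat -> nat) (i : nat) : X -> Prop :=
  fun x => d (alpha (tau1 i)) x < Q2R (q (tau2 i)).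

Definition Junion {X : Type} (d : X -> X -> R) (alpha : nat -> X) (q : nat -> Q)
  (tau1 tau2 : nat -> nat) (sigma : nat -> nat -> nat) (eta : nat -> nat)
  (j : nat) : X -> Prop :=
  fun x => exists i, (i <= eta j)%nat /\ Iball d alpha q tau1 tau2 (sigma j i) x.

Definition semicomputable_compact {X : Type} (d : X -> X -> R) (alpha : nat -> X)
  (q : nat -> Q) (tau1 tau2 : nat -> nat) (sigma : nat -> nat -> nat)
  (eta : nat -> nat) (S : X -> Prop) : Prop :=
  compact d S /\
  ce (fun j => forall x, S x -> Junion d alpha q tau1 tau2 sigma eta j x).

Definition enumerates_finite_seqs (sigma : nat -> nat -> nat) (eta : nat -> nat) : Prop :=
  forall s : list nat, s <> nil ->
    exists j, S (eta j) = length s /\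
      forall i, (i < length s)%nat -> sigma j i = nth i s 0%nat.

(* H_l covers S: S is contained in the union over (j_1..j_n) in {0..tau2 l}^n of
   J_{(l)_{j_1..j_n}}, where (l)_{j_1..j_n} = sigma (tau1 l) (nu (j_1..j_n)) *)
Definition H_covers {X : Type} (d : X -> X -> R) (alpha : nat -> X) (q : nat -> Q)
  (tau1 tau2 : nat -> nat) (sigma : nat -> nat -> nat) (eta : nat -> nat)
  (n : nat) (nu : list nat -> nat) (S : X -> Prop) (l : nat) : Prop :=
  forall x, S x -> exists js : list nat,
    length js = n /\ Forall (fun j => (j <= tau2 l)%nat) js /\
    Junion d alpha q tau1 tau2 sigma eta (sigma (tau1 l) (nu js)) x.

Definition lowerH_covers {X : Type} (d : X -> X -> R) (alpha : nat -> X) (q : nat -> Q)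
  (tau1 tau2 : nat -> nat) (sigma : nat -> nat -> nat) (eta : nat -> nat)
  (n : nat) (nu : list nat -> nat) (S : X -> Prop) (l : nat) : Prop :=
  forall x, S x -> exists js : list nat,
    length js = (n - 1)%nat /\ Forall (fun j => (j <= tau2 l)%nat) js /\
    Junion d alpha q tau1 tau2 sigma eta (sigma (tau1 l) (nu (js ++ 0%nat :: nil))) x.

(* Main.v *)
Require Import Defs.
From Stdlib Require Import Reals QArith Qreals List Arith.
Open Scope R_scope.
From Stdlib Require Import Reals QArith Qreals List Arith Lia Classical.
Open Scope nat_scope.

Definition Tri (s : nat) := s * (s + 1) / 2.

Lemma Tri_S s : Tri (S s) = Tri s + S s.
Proof.
  unfold Tri.
  replace (S s * (S s + 1)) with (s * (s + 1) + S s * 2) by nia.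
  rewrite Nat.div_add by lia. lia.
Qed.

Lemma Tri_mono a b : a <= b -> Tri a <= Tri b.
Proof. induction 1; [lia| rewrite Tri_S; lia]. Qed.

Lemma cpair_Tri x y : cpair x y = Tri (x + y) + y.
Proof. reflexivity. Qed.

Lemma cpair_inj x y x' y' : cpair x y = cpair x' y' -> x = x' /\ y = y'.
Proof.
  rewrite !cpair_Tri. intros H.
  destruct (lt_eq_lt_dec (x + y) (x' + y')) as [[Hl|He]|Hl].
  - assert (Tri (S (x + y)) <= Tri (x' + y')) by (apply Tri_mono; lia).
    rewrite Tri_S in H0. lia.
  - rewrite He in H. lia.
  - assert (Tri (S (x' + y')) <= Tri (x + y)) by (apply Tri_mono; lia).
    rewrite Tri_S in H0. lia.
Qed.

Fixpoint unpair (n : nat) : nat * nat :=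
  match n with
  | 0 => (0, 0)
  | S n' => let (x, y) := unpair n' in
            match x with 0 => (S y, 0) | S x' => (x', S y) end
  end.

Definition p1 n := fst (unpair n).
Definition p2 n := snd (unpair n).

Lemma unpair_spec n : cpair (p1 n) (p2 n) = n.
Proof.
  unfold p1, p2. induction n as [|n IH]; [reflexivity|].
  simpl. destruct (unpair n) as [x y]. simpl in IH.
  destruct x as [|x']; simpl; rewrite !cpair_Tri in *.
  - rewrite !Nat.add_0_r. rewrite Tri_S. simpl in IH. lia.
  - replace (x' + S y) with (S x' + y) by lia. lia.
Qed.

Lemma p1_pair a b : p1 (cpair a b) = a.
Proof. pose proof (unpair_spec (cpair a b)). destruct (cpair_inj _ _ _ _ H); auto. Qed.
Lemma p2_pair a b : p2 (cpair a b) = b.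
Proof. pose proof (unpair_spec (cpair a b)). destruct (cpair_inj _ _ _ _ H); auto. Qed.

Ltac cpinj := repeat match goal with H: cpair _ _ = cpair _ _ |- _ => apply cpair_inj in H; destruct H; subst end.
Lemma eval_det : forall c x y, eval c x y -> forall z, eval c x z -> y = z.
Proof.
  induction c; intros x y H z H'.
  - inversion H; inversion H'; subst; auto.
  - inversion H; inversion H'; subst; auto.
  - inversion H; inversion H'; subst; auto.
  - inversion H; subst. inversion H'; subst. cpinj; auto.
  - inversion H; subst. inversion H'; subst. cpinj; auto.
  - inversion H; subst. inversion H'; subst.
    assert (y0 = y1) by eauto. subst. eauto.
  - inversion H; subst. inversion H'; subst.
    f_equal; eauto.
  -
    assert (Hk : forall k a y z, eval (CRec c1 c2) (cpair a k) y ->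
                 eval (CRec c1 c2) (cpair a k) z -> y = z).
    { induction k; intros a y1 z1 H1 H2.
      - inversion H1; subst; cpinj; try lia.
        inversion H2; subst; cpinj; try lia. eauto.
      - inversion H1; subst; cpinj; try lia.
        inversion H2; subst; cpinj; try lia.
        repeat match goal with H: S _ = S _ |- _ => injection H; clear H; intros; subst end.
        match goal with H1: eval (CRec _ _) (cpair ?a ?k) ?u, H2: eval (CRec _ _) (cpair ?a ?k) ?v |- _ =>
          assert (u = v) by eauto; subst end. eauto. }
    inversion H; subst; eauto.
  - inversion H; subst. inversion H'; subst.
    match goal with Hf: forall k, k < z -> _ |- _ => rename Hf into A2 end.
    match goal with Hf: forall k, k < y -> _ |- _ => rename Hf into B1 end.
    match goal with Hf: eval c (cpair x z) 0 |- _ => rename Hf into B2 end.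
    destruct (lt_eq_lt_dec y z) as [[Hl|He]|Hl]; auto.
    + destruct (A2 y Hl) as [v [Hv Hv']]. exfalso. apply Hv. symmetry. eauto.
    + destruct (B1 z Hl) as [v [Hv Hv']]. exfalso. apply Hv. symmetry. eauto.
Qed.
Fixpoint ccst k := match k with 0 => CZero | S k => CComp CSucc (ccst k) end.

Lemma comp_const k : computable1 (fun _ => k).
Proof. exists (ccst k). intros x. induction k; simpl; econstructor; eauto; constructor. Qed.
Lemma comp_id : computable1 (fun x => x).
Proof. exists CId. constructor. Qed.
Lemma comp_comp f g : computable1 f -> computable1 g -> computable1 (fun x => f (g x)).
Proof. intros [cf Hf] [cg Hg]. exists (CComp cf cg). intros; econstructor; eauto. Qed.
Lemma comp_S f : computable1 f -> computable1 (fun x => S (f x)).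
Proof. intros H. apply (comp_comp S f); auto. exists CSucc; constructor. Qed.
Lemma comp_pair f g : computable1 f -> computable1 g -> computable1 (fun x => cpair (f x) (g x)).
Proof. intros [cf Hf] [cg Hg]. exists (CPair cf cg). intros; econstructor; eauto. Qed.
Lemma comp_p1 f : computable1 f -> computable1 (fun x => p1 (f x)).
Proof. intros H. apply (comp_comp p1 f); auto. exists CFst. intros x.
  rewrite <- (unpair_spec x) at 1. constructor. Qed.
Lemma comp_p2 f : computable1 f -> computable1 (fun x => p2 (f x)).
Proof. intros H. apply (comp_comp p2 f); auto. exists CSnd. intros x.
  rewrite <- (unpair_spec x) at 1. constructor. Qed.
Lemma comp_ext f g : computable1 f -> (forall x, f x = g x) -> computable1 g.
Proof. intros [c Hc] E. exists c. intros x. rewrite <- E. auto. Qed.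

Fixpoint primrec (f g : nat -> nat) (a k : nat) : nat :=
  match k with 0 => f a | S k' => g (cpair a (cpair k' (primrec f g a k'))) end.

Lemma comp_rec f g a k : computable1 f -> computable1 g -> computable1 a -> computable1 k ->
  computable1 (fun x => primrec f g (a x) (k x)).
Proof.
  intros [cf Hf] [cg Hg] Ha Hk.
  assert (H : computable1 (fun z => primrec f g (p1 z) (p2 z))).
  { exists (CRec cf cg). intros z. rewrite <- (unpair_spec z) at 1.
    generalize (p1 z) (p2 z). intros a0 k0. induction k0; simpl.
    - constructor; auto.
    - econstructor; eauto. }
  eapply comp_ext.
  - apply (comp_comp _ _ H (comp_pair _ _ Ha Hk)).
  - intros; simpl. rewrite p1_pair, p2_pair. reflexivity.
Qed.

Lemma comp_add f g : computable1 f -> computable1 g -> computable1 (fun x => f x + g x).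
Proof.
  intros Hf Hg. eapply comp_ext.
  - apply (comp_rec (fun a => a) (fun z => S (p2 (p2 z))) f g); auto.
    + apply comp_id.
    + apply comp_S, comp_p2, comp_p2, comp_id.
  - intros x. simpl. induction (g x); simpl; auto.
    rewrite !p2_pair. lia.
Qed.

Lemma comp_mul f g : computable1 f -> computable1 g -> computable1 (fun x => f x * g x).
Proof.
  intros Hf Hg. eapply comp_ext.
  - apply (comp_rec (fun _ => 0) (fun z => p2 (p2 z) + p1 z) f g); auto.
    + apply comp_const.
    + apply comp_add. apply comp_p2, comp_p2, comp_id. apply comp_p1, comp_id.
  - intros x. simpl. induction (g x); simpl; auto.
    rewrite !p2_pair, p1_pair. lia.
Qed.

Lemma comp_pred f : computable1 f -> computable1 (fun x => pred (f x)).
Proof.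
  intros Hf. eapply comp_ext.
  - apply (comp_rec (fun _ => 0) (fun z => p1 (p2 z)) (fun _ => 0) f); auto.
    + apply comp_const.
    + apply comp_p1, comp_p2, comp_id.
    + apply comp_const.
  - intros x. simpl. destruct (f x); simpl; auto. rewrite p2_pair, p1_pair. auto.
Qed.

Lemma comp_sub f g : computable1 f -> computable1 g -> computable1 (fun x => f x - g x).
Proof.
  intros Hf Hg. eapply comp_ext.
  - apply (comp_rec (fun a => a) (fun z => pred (p2 (p2 z))) f g); auto.
    + apply comp_id.
    + apply comp_pred, comp_p2, comp_p2, comp_id.
  - intros x. simpl. induction (g x); simpl; [lia|].
    rewrite !p2_pair. lia.
Qed.

Ltac comp :=
  repeat match goal with
  | |- computable1 (fun _ => ?k) => apply comp_const
  | |- computable1 (fun x => x) => apply comp_id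
  | |- computable1 (fun x => S _) => apply comp_S
  | |- computable1 (fun x => _ + _) => apply comp_add
  | |- computable1 (fun x => _ * _) => apply comp_mul
  | |- computable1 (fun x => _ - _) => apply comp_sub
  | |- computable1 (fun x => pred _) => apply comp_pred
  | |- computable1 (fun x => cpair _ _) => apply comp_pair
  | |- computable1 (fun x => p1 _) => apply comp_p1
  | |- computable1 (fun x => p2 _) => apply comp_p2
  | H : computable1 ?F |- computable1 (fun x => ?F _) => apply (comp_comp F); [exact H|]
  | H : computable1 ?F |- computable1 ?F => exact H
  | |- computable1 p1 => apply (comp_p1 (fun x => x)), comp_id
  | |- computable1 p2 => apply (comp_p2 (fun x => x)), comp_id
  | |- computable1 S => apply (comp_S (fun x => x)), comp_id
  | |- computable1 pred => apply (comp_pred (fun x => x)), comp_id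
  end.

Definition cdec (P : nat -> Prop) : Prop :=
  exists f, computable1 f /\ forall x, P x <-> f x = 0.

Lemma cdec_ext P Q : cdec P -> (forall x, P x <-> Q x) -> cdec Q.
Proof. intros [f [Hf E]] E2. exists f. split; auto. intros x. rewrite <- E2. auto. Qed.

Lemma cdec_and P Q : cdec P -> cdec Q -> cdec (fun x => P x /\ Q x).
Proof.
  intros [f [Hf E]] [g [Hg E']]. exists (fun x => f x + g x). split. comp.
  intros x. rewrite E, E'. lia.
Qed.

Lemma cdec_or P Q : cdec P -> cdec Q -> cdec (fun x => P x \/ Q x).
Proof.
  intros [f [Hf E]] [g [Hg E']]. exists (fun x => f x * g x). split. comp.
  intros x. rewrite E, E'. split. intros [->| ->]; lia. intros H. apply Nat.mul_eq_0 in H. auto.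
Qed.

Lemma cdec_not P : cdec P -> cdec (fun x => ~ P x).
Proof.
  intros [f [Hf E]]. exists (fun x => 1 - f x). split. comp.
  intros x. rewrite E. lia.
Qed.

Lemma cdec_eq f g : computable1 f -> computable1 g -> cdec (fun x => f x = g x).
Proof.
  intros Hf Hg. exists (fun x => (f x - g x) + (g x - f x)). split. comp. intros; lia.
Qed.

Lemma cdec_le f g : computable1 f -> computable1 g -> cdec (fun x => f x <= g x).
Proof.
  intros Hf Hg. exists (fun x => f x - g x). split. comp. intros; lia.
Qed.

Lemma cdec_comp P h : cdec P -> computable1 h -> cdec (fun x => P (h x)).
Proof.
  intros [f [Hf E]] Hh. exists (fun x => f (h x)). split. comp. intros; apply E.
Qed.

Lemma cdec_bex (P : nat -> nat -> Prop) N :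
  cdec (fun y => P (p1 y) (p2 y)) -> computable1 N ->
  cdec (fun x => exists i, i <= N x /\ P x i).
Proof.
  intros [f [Hf E]] HN.
  exists (fun x => primrec (fun _ => 1) (fun z => p2 (p2 z) * f (cpair (p1 z) (p1 (p2 z)))) x (S (N x))).
  split. { apply comp_rec; comp. }
  intros x.
  assert (forall k, primrec (fun _ => 1) (fun z => p2 (p2 z) * f (cpair (p1 z) (p1 (p2 z)))) x k = 0
            <-> exists i, i < k /\ P x i).
  { induction k as [|k0 IHk0]; simpl.
    - split. lia. intros [i [Hi _]]. lia.
    - rewrite !p2_pair, !p1_pair. split.
      + intros H. apply Nat.mul_eq_0 in H. destruct H as [H|H].
        * apply IHk0 in H. destruct H as [i [Hi Hp]]. exists i. split; auto.
        * exists k0. split; auto. specialize (E (cpair x k0)). rewrite p1_pair, p2_pair in E. apply E; auto.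
      + intros [i [Hi Hp]]. apply Nat.mul_eq_0.
        destruct (Nat.eq_dec i k0).
        * subst. right. specialize (E (cpair x k0)). rewrite p1_pair, p2_pair in E. apply E; auto.
        * left. apply IHk0. exists i. split; auto. lia. }
  rewrite H. split; intros [i [Hi Hp]]; exists i; split; auto; lia.
Qed.

Lemma cdec_ball (P : nat -> nat -> Prop) N :
  cdec (fun y => P (p1 y) (p2 y)) -> computable1 N ->
  cdec (fun x => forall i, i <= N x -> P x i).
Proof.
  intros HP HN.
  assert (H : cdec (fun x => ~ exists i, i <= N x /\ ~ P x i)).
  { apply cdec_not. apply cdec_bex; auto. apply cdec_not; auto. }
  eapply cdec_ext; [exact H|]. intros x. split.
  - intros Hn i Hi. apply NNPP. intros Hc. apply Hn. eauto.
  - intros Ha [i [Hi Hc]]. apply Hc. auto.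
Qed.

Definition Tex (k : nat) (r : list nat) (T : nat -> nat) (Q : nat -> nat -> Prop) (x : nat) : Prop :=
  exists js, length js = k /\ Forall (fun j => j <= T x) js /\ Q x (tcode (js ++ r)).

Lemma cdec_tup k r : forall T Q, computable1 T -> cdec (fun y => Q (p1 y) (p2 y)) ->
  cdec (Tex k r T Q).
Proof.
  induction k; intros T Q HT HQ.
  - eapply cdec_ext.
    + apply (cdec_comp _ (fun x => cpair x (tcode r)) HQ). comp.
    + intros x. cbv beta. rewrite p1_pair, p2_pair. unfold Tex. split.
      * intros H. exists nil. simpl. auto.
      * intros [js [Hl [_ H]]]. destruct js; [|discriminate]. exact H.
  - assert (H1 : cdec (fun y => Tex k r (fun w => T (p1 w))
                     (fun w a => Q (p1 w) (S (cpair (p2 w) a))) y)).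
    { apply IHk. comp.
      eapply cdec_ext.
      - apply (cdec_comp _ (fun w => cpair (p1 (p1 w)) (S (cpair (p2 (p1 w)) (p2 w)))) HQ). comp.
      - intros w. cbv beta. rewrite p1_pair, p2_pair. tauto. }
    assert (H2 : cdec (fun x => exists i, i <= T x /\
               Tex k r (fun w => T (p1 w)) (fun w a => Q (p1 w) (S (cpair (p2 w) a))) (cpair x i))).
    { apply (cdec_bex (fun x i => Tex k r (fun w => T (p1 w)) (fun w a => Q (p1 w) (S (cpair (p2 w) a))) (cpair x i))); auto.
      eapply cdec_ext; [exact H1|]. intros y. rewrite unpair_spec. tauto. }
    eapply cdec_ext; [exact H2|]. intros x. unfold Tex. rewrite ?p1_pair, ?p2_pair.
    split.
    + intros [i [Hi [js [Hl [Hf Hq]]]]]. rewrite ?p1_pair, ?p2_pair in *.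
      exists (i :: js). simpl. repeat split; auto.
    + intros [js [Hl [Hf Hq]]]. destruct js as [|i js]; [discriminate|].
      inversion Hf; subst. exists i. split; auto. exists js.
      rewrite ?p1_pair, ?p2_pair. simpl in Hl. repeat split; auto.
Qed.

Fixpoint declist (k a : nat) : list nat :=
  match k with 0 => nil | S k' => p1 (pred a) :: declist k' (p2 (pred a)) end.

Lemma declist_len k a : length (declist k a) = k.
Proof. revert a; induction k; simpl; auto. Qed.

Lemma declist_tcode l : declist (length l) (tcode l) = l.
Proof. induction l; simpl; auto. rewrite p1_pair, p2_pair, IHl. auto. Qed.

Lemma comp_tcode_declist k : computable1 (fun a => tcode (declist k a)).
Proof.
  induction k; simpl. comp.
  set (F := fun a => tcode (declist k a)) in *.
  change (computable1 (fun a => S (cpair (p1 (pred a)) (F (p2 (pred a)))))). comp.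
Qed.

Lemma comp_nu n nu : computable_tuple n nu -> computable1 (fun a => nu (declist n a)).
Proof.
  intros [c Hc]. destruct (comp_tcode_declist n) as [c' Hc'].
  exists (CComp c c'). intros a. econstructor; eauto. apply Hc. apply declist_len.
Qed.

Lemma comp_sigma sigma f g : computable2 sigma -> computable1 f -> computable1 g ->
  computable1 (fun x => sigma (f x) (g x)).
Proof.
  intros [c Hc] Hf Hg.
  assert (H : computable1 (fun x => S (cpair (f x) (S (cpair (g x) 0))))) by comp.
  destruct H as [c' Hc']. exists (CComp c c'). intros x. econstructor; eauto. apply Hc.
Qed.

Lemma exists_least (P : nat -> Prop) : (exists m, P m) -> exists m, P m /\ forall k, k < m -> ~ P k.
Proof.
  intros [m Hm]. induction m as [m IH] using (well_founded_induction lt_wf).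
  destruct (classic (exists k, k < m /\ P k)) as [[k [Hk Pk]]|Hn].
  - exact (IH k Hk Pk).
  - exists m. split; auto. intros k Hk Pk. apply Hn. eauto.
Qed.

Lemma ce_from (C : nat -> Prop) (D : nat -> nat -> Prop) (A : nat -> Prop) :
  ce C -> cdec (fun y => D (p1 y) (p2 y)) -> (forall l, exists j, D l j) ->
  (forall l j, D l j -> (A l <-> C j)) -> ce A.
Proof.
  intros [cC HC] [f [[cf Hf] E]] Hex HA.
  exists (CComp cC (CMu cf)). intros l. split.
  - intros Al. destruct (exists_least _ (Hex l)) as [j [Dj Hmin]].
    assert (Cj : C j) by (apply (HA l j Dj); auto).
    apply HC in Cj. destruct Cj as [y Hy]. exists y. econstructor; [|exact Hy].
    constructor.
    + specialize (E (cpair l j)). rewrite p1_pair, p2_pair in E. apply E in Dj.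
      rewrite <- Dj. apply Hf.
    + intros k Hk. exists (f (cpair l k)). split; auto.
      intros H0. apply (Hmin k Hk). specialize (E (cpair l k)). rewrite p1_pair, p2_pair in E. apply E. auto.
  - intros [y Hy]. inversion Hy; subst.
    match goal with H: eval (CMu cf) l ?m |- _ => inversion H; subst; rename m into j end.
    match goal with H: eval cf (cpair l j) 0 |- _ => pose proof (eval_det _ _ _ (Hf (cpair l j)) _ H) as Hz end.
    assert (Dj : D l j). { specialize (E (cpair l j)). rewrite p1_pair, p2_pair in E. apply E. auto. }
    apply (HA l j Dj). apply HC. eauto.
Qed.

Definition nuT (n : nat) (nu : list nat -> nat) (a : nat) := nu (declist n a).

Lemma nuT_tcode n nu l : length l = n -> nuT n nu (tcode l) = nu l.
Proof. intros <-. unfold nuT. rewrite declist_tcode. auto. Qed.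

Ltac comp' :=
  repeat match goal with
  | H : computable2 ?s |- computable1 (fun x => ?s _ _) => apply (comp_sigma s); [exact H| |]
  | |- computable1 (fun _ => ?k) => apply comp_const
  | |- computable1 (fun x => x) => apply comp_id
  | |- computable1 (fun x => S _) => apply comp_S
  | |- computable1 (fun x => _ + _) => apply comp_add
  | |- computable1 (fun x => _ * _) => apply comp_mul
  | |- computable1 (fun x => _ - _) => apply comp_sub
  | |- computable1 (fun x => pred _) => apply comp_pred
  | |- computable1 (fun x => cpair _ _) => apply comp_pair
  | |- computable1 (fun x => p1 _) => apply comp_p1
  | |- computable1 (fun x => p2 _) => apply comp_p2
  | H : computable1 ?F |- computable1 (fun x => ?F _) => apply (comp_comp F); [exact H|]
  | H : computable1 ?F |- computable1 ?F => exact H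
  | |- computable1 p1 => apply (comp_p1 (fun x => x)), comp_id
  | |- computable1 p2 => apply (comp_p2 (fun x => x)), comp_id
  | |- computable1 S => apply (comp_S (fun x => x)), comp_id
  | |- computable1 pred => apply (comp_pred (fun x => x)), comp_id
  end.

Definition DD (tau1 tau2 : nat -> nat) (sigma : nat -> nat -> nat) (eta : nat -> nat)
  (n : nat) (nu : list nat -> nat) (k : nat) (r : list nat) (y : nat) : Prop :=
 (forall i, i <= eta (p2 y) ->
   Tex k r (fun w => tau2 (p1 (p1 w)))
     (fun w a => exists i', i' <= eta (sigma (tau1 (p1 (p1 w))) (nuT n nu a)) /\
          sigma (p2 (p1 w)) (p2 w) = sigma (sigma (tau1 (p1 (p1 w))) (nuT n nu a)) i') (cpair y i))
 /\ ~ Tex k r (fun w => tau2 (p1 w))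
      (fun w a => exists i', i' <= eta (sigma (tau1 (p1 w)) (nuT n nu a)) /\
          ~ exists i, i <= eta (p2 w) /\ sigma (p2 w) i = sigma (sigma (tau1 (p1 w)) (nuT n nu a)) i') y.

Lemma DD_dec tau1 tau2 sigma eta n nu k r :
  computable1 tau1 -> computable1 tau2 -> computable2 sigma -> computable1 eta ->
  computable1 (nuT n nu) -> cdec (DD tau1 tau2 sigma eta n nu k r).
Proof.
  intros H1 H2 Hs He Hn. unfold DD. apply cdec_and.
  - apply (cdec_ball (fun y i => Tex k r (fun w => tau2 (p1 (p1 w)))
     (fun w a => exists i', i' <= eta (sigma (tau1 (p1 (p1 w))) (nuT n nu a)) /\
          sigma (p2 (p1 w)) (p2 w) = sigma (sigma (tau1 (p1 (p1 w))) (nuT n nu a)) i') (cpair y i))); [|comp'].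
    eapply cdec_ext; [|intros z; rewrite unpair_spec; reflexivity].
    apply cdec_tup; [comp'|].
    apply (cdec_bex (fun v i' => sigma (p2 (p1 (p1 v))) (p2 (p1 v)) = sigma (sigma (tau1 (p1 (p1 (p1 v)))) (nuT n nu (p2 v))) i')); [|comp'].
    apply cdec_eq; comp'.
  - apply cdec_not. apply cdec_tup; [comp'|].
    apply (cdec_bex (fun v i' => ~ exists i, i <= eta (p2 (p1 v)) /\ sigma (p2 (p1 v)) i = sigma (sigma (tau1 (p1 (p1 v))) (nuT n nu (p2 v))) i')); [|comp'].
    apply cdec_not.
    apply (cdec_bex (fun u i => sigma (p2 (p1 (p1 u))) i = sigma (sigma (tau1 (p1 (p1 (p1 u)))) (nuT n nu (p2 (p1 u)))) (p2 u))); [|comp'].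
    apply cdec_eq; comp'.
Qed.

Fixpoint tuples (k t : nat) : list (list nat) :=
  match k with
  | 0 => nil :: nil
  | S k' => flat_map (fun a => map (cons a) (tuples k' t)) (seq 0 (S t))
  end.

Lemma In_tuples k t js : In js (tuples k t) <-> length js = k /\ Forall (fun j => j <= t) js.
Proof.
  revert js; induction k; intros js; cbn [tuples].
  - simpl. split. intros [<-|[]]. auto. intros [Hl _]. destruct js; [auto|discriminate].
  - rewrite in_flat_map. split.
    + intros [a [Ha Hm]]. apply in_map_iff in Hm. destruct Hm as [js' [<- Hj]].
      apply IHk in Hj. apply in_seq in Ha. destruct Hj. simpl. split; auto. constructor; auto; lia.
    + intros [Hl Hf]. destruct js as [|a js']; [discriminate|]. inversion Hf; subst.
      exists a. split. apply in_seq; lia. apply in_map. apply IHk. simpl in Hl. auto.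
Qed.


Lemma DD_spec {X : Type} (d : X -> X -> R) alpha q tau1 tau2 sigma eta n nu k r l j x :
  k + length r = n ->
  DD tau1 tau2 sigma eta n nu k r (cpair l j) ->
  (Junion d alpha q tau1 tau2 sigma eta j x <->
   exists js, length js = k /\ Forall (fun jj => jj <= tau2 l) js /\
     Junion d alpha q tau1 tau2 sigma eta (sigma (tau1 l) (nu (js ++ r))) x).
Proof.
  intros Hkr [HA HB]. unfold Junion. split.
  - intros [i [Hi Hb]]. rewrite p2_pair in HA. destruct (HA i Hi) as [js [Hl [Hf [i' [Hi' Heq]]]]].
    rewrite ?p1_pair, ?p2_pair in *.
    rewrite nuT_tcode in * by (rewrite length_app; lia).
    exists js. split; auto. split; auto. exists i'. split; auto. rewrite <- Heq. auto.
  - intros [js [Hl [Hf [i' [Hi' Hb]]]]].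
    destruct (classic (exists i, i <= eta j /\ sigma j i = sigma (sigma (tau1 l) (nu (js ++ r))) i')) as [[i [Hi Heq]]|Hn].
    + exists i. split; auto. rewrite Heq. auto.
    + exfalso. apply HB. exists js. rewrite ?p1_pair, ?p2_pair.
      rewrite nuT_tcode by (rewrite length_app; lia).
      split; auto. split; auto. exists i'. split; auto.
Qed.

Lemma DD_exists tau1 tau2 sigma eta n nu k r l :
  k + length r = n -> enumerates_finite_seqs sigma eta ->
  exists j, DD tau1 tau2 sigma eta n nu k r (cpair l j).
Proof.
  intros Hkr Henum.
  set (p := fun js => sigma (tau1 l) (nu (js ++ r))).
  set (L := flat_map (fun js => map (sigma (p js)) (seq 0 (S (eta (p js))))) (tuples k (tau2 l))).
  assert (HL : forall e, In e L <-> exists js, length js = k /\ Forall (fun jj => jj <= tau2 l) js /\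
             exists i', i' <= eta (p js) /\ e = sigma (p js) i').
  { intros e. unfold L. rewrite in_flat_map. split.
    - intros [js [Hj He]]. apply In_tuples in Hj. apply in_map_iff in He.
      destruct He as [i' [<- Hi']]. apply in_seq in Hi'. exists js. destruct Hj. repeat split; auto.
      exists i'. split; auto. lia.
    - intros [js [Hl [Hf [i' [Hi' ->]]]]]. exists js. split. apply In_tuples; auto.
      apply in_map. apply in_seq. lia. }
  assert (Hne : L <> nil).
  { intros H0. assert (In (sigma (p (repeat 0 k)) 0) L).
    { apply HL. exists (repeat 0 k). split. apply repeat_length. split.
      apply Forall_forall. intros a Ha. apply repeat_spec in Ha. lia.
      exists 0. split; auto. lia. }
    rewrite H0 in H. destruct H. }
  destruct (Henum L Hne) as [j [Hlen Hnth]].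
  exists j. split.
  - intros i Hi. rewrite p2_pair in Hi.
    assert (Hi2 : i < length L) by lia.
    assert (Hin : In (nth i L 0) L) by (apply nth_In; auto).
    apply HL in Hin. destruct Hin as [js [Hl [Hf [i' [Hi' He]]]]].
    exists js. rewrite ?p1_pair, ?p2_pair.
    rewrite nuT_tcode by (rewrite length_app; lia).
    split; auto. split; auto. exists i'. split; auto. rewrite Hnth by auto. exact He.
  - intros [js [Hl [Hf [i' [Hi' Hn]]]]]. rewrite ?p1_pair, ?p2_pair in *.
    rewrite nuT_tcode in * by (rewrite length_app; lia).
    apply Hn.
    assert (Hin : In (sigma (p js) i') L) by (apply HL; eauto 10).
    destruct (In_nth L _ 0 Hin) as [i [Hi He]].
    exists i. split. lia. rewrite Hnth by auto. exact He.
Qed.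

Lemma core {X : Type} (d : X -> X -> R) alpha q tau1 tau2 sigma eta n nu (S : X -> Prop) k r :
  k + length r = n ->
  computable1 tau1 -> computable1 tau2 -> computable2 sigma -> computable1 eta ->
  enumerates_finite_seqs sigma eta -> computable_tuple n nu ->
  semicomputable_compact d alpha q tau1 tau2 sigma eta S ->
  ce (fun l => forall x, S x -> exists js, length js = k /\ Forall (fun jj => jj <= tau2 l) js /\
     Junion d alpha q tau1 tau2 sigma eta (sigma (tau1 l) (nu (js ++ r))) x).
Proof.
  intros Hkr H1 H2 Hs He Henum Hnu [_ HC].
  apply (ce_from _ (fun l j => DD tau1 tau2 sigma eta n nu k r (cpair l j)) _ HC).
  - eapply cdec_ext; [apply (DD_dec tau1 tau2 sigma eta n nu k r); auto; exact (comp_nu n nu Hnu)|].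
    intros y. cbv beta. rewrite unpair_spec. tauto.
  - intros l. apply DD_exists; auto.
  - intros l j HD. split.
    + intros HA x Sx. apply (DD_spec d alpha q _ _ _ _ _ _ _ _ l j x Hkr HD). auto.
    + intros HCj x Sx. apply (DD_spec d alpha q _ _ _ _ _ _ _ _ l j x Hkr HD). auto.
Qed.

Lemma ce_ext (A B : nat -> Prop) : ce A -> (forall x, A x <-> B x) -> ce B.
Proof. intros [c Hc] E. exists c. intros x. rewrite <- E. auto. Qed.

Open Scope R_scope.

Theorem proposition5p3
  (X : Type) (d : X -> X -> R) (alpha : nat -> X)
  (q : nat -> Q) (tau1 tau2 : nat -> nat)
  (sigma : nat -> nat -> nat) (eta : nat -> nat)
  (n : nat) (nu : list nat -> nat) (S : X -> Prop) :
  (* (X, d, alpha) is a computable metric space *)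
  is_metric d ->
  dense_seq d alpha ->
  computableR2 (fun i j => d (alpha i) (alpha j)) ->
  (* fixed enumerations *)
  computableQ1 q ->
  (forall i, (0 < q i)%Q) ->
  (forall r : Q, (0 < r)%Q -> exists i, (q i == r)%Q) ->
  computable1 tau1 -> computable1 tau2 ->
  (forall a b, exists i, tau1 i = a /\ tau2 i = b) ->
  computable2 sigma -> computable1 eta ->
  enumerates_finite_seqs sigma eta ->
  (1 <= n)%nat ->
  computable_tuple n nu ->
  (forall l1 l2, length l1 = n -> length l2 = n -> nu l1 = nu l2 -> l1 = l2) ->
  semicomputable_compact d alpha q tau1 tau2 sigma eta S ->
  ce (fun l => H_covers d alpha q tau1 tau2 sigma eta n nu S l) /\
  ce (fun l => lowerH_covers d alpha q tau1 tau2 sigma eta n nu S l).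
Proof.
  intros _ _ _ _ _ _ H1 H2 _ Hs He Henum Hn Hnu _ HS. split.
  - eapply ce_ext. apply (core d alpha q tau1 tau2 sigma eta n nu S n nil); auto.
    all: try (simpl; lia).
    intros l. unfold H_covers. split; intros H x Sx; destruct (H x Sx) as [js Hj];
      exists js; rewrite ?app_nil_r in *; auto.
  - eapply ce_ext. apply (core d alpha q tau1 tau2 sigma eta n nu S (n - 1) (0%nat :: nil)); auto.
    all: try (simpl; lia).
    intros l. unfold lowerH_covers. tauto.
Qed.
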